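(* Let $n \geq 2$ and let $BH_n$ be the $n$-dimensional balanced hypercube. Let $S=\{s_1,\dots,s_{2n-2}\}\subseteq V_0$ and $T=\{t_1,\dots,t_{2n-2}\}\subseteq V_1$ be sets of $2n-2$ distinct vertices each. For $i\in\{0,1,2,3\}$ let $BH_{n-1}^i$ be the subgraph of $BH_n$ induced by the vertices whose $(n-1)$-dimensional index $a_{n-1}$ equals $i$, and put $S_i=V(BH_{n-1}^i)\cap S$, $T_i=V(BH_{n-1}^i)\cap T$, $D_i=|T_i|-|S_i|$, with all indices $i$ taken modulo $4$. Then there exists $i\in\{0,1,2,3\}$ such that $|S_i|\geq |T_i|$ and $|S_{i+1}|\leq |T_{i+1}|$, and furthermore $D_{i+1}+D_{i+2}\geq 0$.
   Context: The $n$-dimensional balanced hypercube $BH_n$ ($n\ge 1$) has vertex set $\{(a_0,a_1,\dots,a_{n-1}) : a_i\in\{0,1,2,3\}\}$ ($4^n$ vertices). A vertex $v=(a_0,\dots,a_{n-1})$ is adjacent to exactly the following $2n$ vertices: $((a_0\pm 1)\bmod 4, a_1,\dots,a_{n-1})$, and, for each $1\le i\le n-1$, $((a_0\pm1)\bmod 4, a_1,\dots,a_{i-1},(a_i+(-1)^{a_0})\bmod 4,a_{i+1},\dots,a_{n-1})$. The coordinate $a_0$ is the inner index and $a_i$ ($1\le i\le n-1$) is the $i$-dimensional index. $BH_n$ is bipartite with bipartition $V_0$ (vertices with even inner index) and $V_1$ (vertices with odd inner index). Each $BH_{n-1}^i$ is isomorphic to $BH_{n-1}$. *)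

(* Defs.v *)
From mathcomp Require Import all_boot all_order all_algebra.
Set Implicit Arguments. Unset Strict Implicit. Unset Printing Implicit Defensive.

Definition bh_vertex (n : nat) := (n.-tuple 'I_4)%type.

(* a_i as a natural number (0 if i >= n, never used in that case). *)
Definition coord (n : nat) (v : bh_vertex n) (i : nat) : nat :=
  nat_of_ord (nth ord0 (tval v) i).

(* Adjacency of BH_n (documentation of the graph; the statement only
   involves vertex sets). *)
Definition bh_adj (n : nat) : rel (bh_vertex n) := fun v w =>
  [exists e : 'I_4,
    ((e == 1 :> nat) || (e == 3 :> nat)) &&
    (coord w 0 == (coord v 0 + e) %% 4) &&
    ( [forall j : 'I_n, (0 < j) ==> (coord w j == coord v j)]
      || [exists i : 'I_n, (0 < i) &&
           (coord w i == (coord v i + (if odd (coord v 0) then 3 else 1)) %% 4) &&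
           [forall j : 'I_n, ((0 < j) && (j != i)) ==> (coord w j == coord v j)]])].

Definition V0 (n : nat) : {set bh_vertex n} := [set v | ~~ odd (coord v 0)].
Definition V1 (n : nat) : {set bh_vertex n} := [set v | odd (coord v 0)].

Definition subcube (n : nat) (i : nat) : {set bh_vertex n} :=
  [set v | coord v n.-1 == i %% 4].

Definition Dval (n : nat) (S T : {set bh_vertex n}) (i : nat) : int :=
  (#|subcube n i :&: T|%:Z - #|subcube n i :&: S|%:Z)%R.

(* Main.v *)
Require Import Defs.
From mathcomp Require Import all_boot all_order all_algebra.
From mathcomp Require Import zify.
Import Order.TTheory GRing.Theory Num.Theory.

Lemma subcube_mod n k : subcube n k = subcube n (k %% 4).
Proof. by rewrite /subcube modn_mod. Qed.

Lemma part {n} (A : {set bh_vertex n}) :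
  #|A| = \sum_(i < 4) #|subcube n i :&: A|.
Proof.
rewrite -sum1_card (partition_big (fun v : bh_vertex n =>
   Ordinal (ltn_ord (nth ord0 (tval v) n.-1))) predT) //=.
apply: eq_bigr => i _; rewrite -sum1_card; apply: eq_bigl => v.
rewrite !inE /coord modn_small ?ltn_ord // andbC.
by rewrite /Defs.coord.
Qed.

Theorem lemma7 (n : nat) (S T : {set bh_vertex n}) :
  2 <= n ->
  S \subset V0 n -> #|S| = (2 * n - 2)%N ->
  T \subset V1 n -> #|T| = (2 * n - 2)%N ->
  exists i : 'I_4,
    [/\ #|subcube n i :&: S| >= #|subcube n i :&: T|,
        #|subcube n i.+1 :&: S| <= #|subcube n i.+1 :&: T|
      & (0 <= Dval S T i.+1 + Dval S T i.+2)%R].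
Proof.
move=> _ _ HS _ HT.
have eS := part S; have eT := part T.
rewrite !big_ord_recr big_ord0 /= in eS.
rewrite !big_ord_recr big_ord0 /= in eT.
have e4 : subcube n 4 = subcube n 0 by rewrite subcube_mod.
have e5 : subcube n 5 = subcube n 1 by rewrite subcube_mod.
rewrite /Dval.
move: eS eT; set s0 := #|subcube n 0 :&: S|; set s1 := #|subcube n 1 :&: S|;
  set s2 := #|subcube n 2 :&: S|; set s3 := #|subcube n 3 :&: S|;
  set t0 := #|subcube n 0 :&: T|; set t1 := #|subcube n 1 :&: T|;
  set t2 := #|subcube n 2 :&: T|; set t3 := #|subcube n 3 :&: T| => eS eT.
have : [\/ [/\ t0 <= s0, s1 <= t1 & (0 <= (t1%:Z - s1%:Z) + (t2%:Z - s2%:Z))%R],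
           [/\ t1 <= s1, s2 <= t2 & (0 <= (t2%:Z - s2%:Z) + (t3%:Z - s3%:Z))%R],
           [/\ t2 <= s2, s3 <= t3 & (0 <= (t3%:Z - s3%:Z) + (t0%:Z - s0%:Z))%R] |
           [/\ t3 <= s3, s0 <= t0 & (0 <= (t0%:Z - s0%:Z) + (t1%:Z - s1%:Z))%R]].
  have H : (s0 + s1 + s2 + s3 = t0 + t1 + t2 + t3)%N by rewrite -eS -eT HS HT.
  move: H; clear; move=> H.
  have : ((t0 <= s0 /\ s1 <= t1 /\ (0 <= (t1%:Z - s1%:Z) + (t2%:Z - s2%:Z))%R) \/
          (t1 <= s1 /\ s2 <= t2 /\ (0 <= (t2%:Z - s2%:Z) + (t3%:Z - s3%:Z))%R) \/
          (t2 <= s2 /\ s3 <= t3 /\ (0 <= (t3%:Z - s3%:Z) + (t0%:Z - s0%:Z))%R) \/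
          (t3 <= s3 /\ s0 <= t0 /\ (0 <= (t0%:Z - s0%:Z) + (t1%:Z - s1%:Z))%R)).
    lia.
  case=> [[a [b c]]|[[a [b c]]|[[a [b c]]|[a [b c]]]]].
  - by apply: Or41; split.
  - by apply: Or42; split.
  - by apply: Or43; split.
  - by apply: Or44; split.
case=> [[a b c]|[a b c]|[a b c]|[a b c]].
- by exists (@Ordinal 4 0 isT).
- by exists (@Ordinal 4 1 isT).
- by exists (@Ordinal 4 2 isT); rewrite /= e4.
- by exists (@Ordinal 4 3 isT); rewrite /= e4 e5.
Qed.
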